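(* The cobordism group of two-dimensional geometric graphs is nontrivial: there exists a graph $G$ in which every unit sphere is a cycle $C_n$ with $n\ge4$, such that $G$ is not the boundary of any three-dimensional geometric graph with boundary.
   Context: All graphs are finite simple graphs. For a vertex $x$, $S(x)$ is the subgraph induced by the neighbors of $x$. A graph is contractible if it is $K_1$, or, inductively, if there is a vertex $x$ with both $S(x)$ and the subgraph induced by $V\setminus\{x\}$ contractible. $\mathcal{G}_0$: graphs without edges; $\mathcal{S}_0$: those with two vertices; $\mathcal{B}_0$: those with one vertex. For $d\ge1$: $\mathcal{G}_d$ is the class of graphs in which every $S(x)$ lies in $\mathcal{S}_{d-1}\cup\mathcal{B}_{d-1}$; the boundary $\delta G$ is the subgraph induced by vertices with $S(x)\in\mathcal{B}_{d-1}$, and the interior must be nonempty; $\mathcal{B}_d$: contractible graphs in $\mathcal{G}_d$ with boundary in $\mathcal{S}_{d-1}$; $\mathcal{S}_d$: non-contractible graphs in $\mathcal{G}_d$ such that removing any single vertex yields a graph in $\mathcal{B}_d$. A three-dimensional geometric graph with boundary is a graph in $\mathcal{G}_3$. Two closed two-dimensional geometric graphs are cobordant if their disjoint union is the boundary $\delta H$ of some three-dimensional geometric graph with boundary $H$; cobordism classes form a group under disjoint union, whose neutral element is the class of graphs cobordant to the empty graph (boundaries). *)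

(* Defs.v *)
(* Finite simple graphs = symmetric irreflexive relations on a finType;
   subgraphs are the induced subgraphs on subsets A : {set T}. *)
From mathcomp Require Import all_boot.
Set Implicit Arguments. Unset Strict Implicit. Unset Printing Implicit Defensive.

Section Geom.
Variables (T : finType) (e : rel T).

Definition nbr (A : {set T}) (x : T) : {set T} := [set y in A | e x y].

Inductive contractible : {set T} -> Prop :=
| contr_K1 (A : {set T}) : #|A| = 1 -> contractible A
| contr_step (A : {set T}) (x : T) : x \in A ->
    contractible (nbr A x) -> contractible (A :\ x) -> contractible A.

Definition edgeless (A : {set T}) : Prop :=
  forall x y, x \in A -> y \in A -> ~~ e x y.

(* D is the boundary of A, where Bp is the class B_{d-1} *)
Definition is_bdry (Bp : {set T} -> Prop) (A D : {set T}) : Prop :=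
  forall x, x \in D <-> (x \in A /\ Bp (nbr A x)).

(* membership in G_d, given Sp = S_{d-1}, Bp = B_{d-1}, for d >= 1:
   every sphere in S_{d-1} or B_{d-1}, and the interior is nonempty *)
Definition inGstep (Sp Bp : {set T} -> Prop) (A : {set T}) : Prop :=
  (forall x, x \in A -> Sp (nbr A x) \/ Bp (nbr A x)) /\
  (exists x, x \in A /\ ~ Bp (nbr A x)).

Fixpoint SB (d : nat) : ({set T} -> Prop) * ({set T} -> Prop) :=
  match d with
  | 0 => (fun A => edgeless A /\ #|A| = 2, fun A => edgeless A /\ #|A| = 1)
  | d'.+1 =>
    let Sp := (SB d').1 in let Bp := (SB d').2 in
    let Bd := fun A => contractible A /\ inGstep Sp Bp A /\
                       exists D, is_bdry Bp A D /\ Sp D in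
    (fun A => ~ contractible A /\ inGstep Sp Bp A /\
              forall x, x \in A -> Bd (A :\ x), Bd)
  end.

Definition inS d := (SB d).1.
Definition inB d := (SB d).2.

Definition inG (d : nat) (A : {set T}) : Prop :=
  match d with 0 => edgeless A | d'.+1 => inGstep (inS d') (inB d') A end.

Definition boundary (d : nat) (A D : {set T}) : Prop := is_bdry (inB d.-1) A D.

Definition is_cycle_ge4 (A : {set T}) : Prop :=
  exists s : seq T, [/\ 4 <= size s, uniq s, A =i s &
    forall x0 i j, i < size s -> j < size s ->
      e (nth x0 s i) (nth x0 s j) =
      (j == i.+1 %% size s) || (i == j.+1 %% size s)].

End Geom.

Definition simple_graph (T : finType) (e : rel T) : Prop := symmetric e /\ irreflexive e.

(* Main.v *)
Require Import Defs.
From mathcomp Require Import all_boot all_algebra zify.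
Set Implicit Arguments. Unset Strict Implicit. Unset Printing Implicit Defensive.
Import GRing.Theory Num.Theory.

Lemma in_nbrG (V : finType) (g : rel V) (A : {set V}) x y : (y \in nbr g A x) = (y \in A) && g x y.
Proof. by rewrite inE. Qed.

Section Gen.
Variables (U : finType) (f : rel U).
Hypotheses (fsym : symmetric f) (firr : irreflexive f).

Definition clique (K : {set U}) : bool :=
  [forall x in K, forall y in K, (x != y) ==> f x y].

Lemma cliqueP (K : {set U}) : reflect (forall x y, x \in K -> y \in K -> x != y -> f x y) (clique K).
Proof.
apply: (iffP forallP) => [H x y xK yK nxy | H x].
  by move: (H x); rewrite xK /= => /forallP/(_ y); rewrite yK nxy.
apply/implyP => xK; apply/forallP => y; apply/implyP => yK; apply/implyP; exact: H.
Qed.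

Lemma in_nbr (A : {set U}) x y : (y \in nbr f A x) = (y \in A) && f x y.
Proof. by rewrite inE. Qed.

Lemma clique_add x (A K : {set U}) : x \in A ->
  (clique (x |: K) && (x |: K \subset A) && ((x |: K) :\ x == K))
  = (clique K && (K \subset nbr f A x)).
Proof.
move=> xA.
apply/idP/idP.
- case/andP => /andP [/cliqueP cl sub] /eqP eK.
  have xK : x \notin K by rewrite -eK setD11.
  apply/andP; split.
    apply/cliqueP => a b aK bK; apply: cl; rewrite inE ?aK ?bK orbT //.
  apply/subsetP => y yK; rewrite in_nbr.
  rewrite (subsetP sub) ?inE ?yK ?orbT //=.
  apply: cl; rewrite ?inE ?eqxx ?yK ?orbT //.
  by apply/eqP => exy; rewrite exy yK in xK.
- case/andP => /cliqueP cl /subsetP sub.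
  have xK : x \notin K.
    by apply/negP => /sub; rewrite in_nbr firr andbF.
  apply/andP; split; last first.
    by apply/eqP; apply/setP => y; rewrite !inE; case: eqP => // ->; rewrite (negbTE xK).
  apply/andP; split.
    apply/cliqueP => a b; rewrite !inE => /orP[/eqP->|aK] /orP[/eqP->|bK].
    + by rewrite eqxx.
    + by move=> _; move: (sub b bK); rewrite in_nbr => /andP[].
    + by move=> _; rewrite fsym; move: (sub a aK); rewrite in_nbr => /andP[].
    + exact: cl.
  apply/subsetP => y; rewrite !inE => /orP[/eqP->//|yK].
  by move: (sub y yK); rewrite in_nbr => /andP[].
Qed.

Lemma card_add x (A K : {set U}) : x \in A -> K \subset nbr f A x -> #|x |: K| = #|K|.+1.
Proof.
move=> xA /subsetP sub; rewrite cardsU1.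
have -> : x \notin K by apply/negP => /sub; rewrite in_nbr firr andbF.
by [].
Qed.

Open Scope ring_scope.

Lemma sum_nbr (A : {set U}) x (F : {set U} -> int) : x \in A ->
  \sum_(K | clique K && (K \subset nbr f A x)) F (x |: K) =
  \sum_(C | clique C && (C \subset A) && (x \in C)) F C.
Proof.
move=> xA.
symmetry.
rewrite (reindex_onto (fun K => x |: K) (fun C => C :\ x)).
  2: by move=> C /andP[_ xC]; rewrite setD1K.
symmetry.
apply: eq_bigl => K.
rewrite setU11 andbT -(clique_add K xA).
by [].
Qed.


Definition rchi (X : {set U}) : int :=
  \sum_(K | clique K && (K \subset X)) (-1) ^+ #|K|.

Lemma rchi_del (A : {set U}) x : x \in A ->
  rchi A = rchi (A :\ x) - rchi (nbr f A x).
Proof.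
move=> xA; rewrite /rchi (bigID (fun K : {set U} => x \in K)) /= addrC.
congr (_ + _).
  apply: eq_bigl => K; rewrite subsetD1 andbA.
  by [].
rewrite -(sum_nbr _ xA) -sumrN.
apply: eq_bigr => K /andP[_ sub].
by rewrite (card_add xA sub) exprS mulN1r.
Qed.

Lemma sumR (A : {set U}) (G : nat -> int) :
  \sum_(v in A) \sum_(K | clique K && (K \subset nbr f A v)) G #|K| =
  \sum_(C | clique C && (C \subset A)) G #|C|.-1 *+ #|C|.
Proof.
transitivity (\sum_(v in A) \sum_(C | clique C && (C \subset A)) 
   (if v \in C then G #|C|.-1 else 0)).
  apply: eq_bigr => v vA.
  rewrite -big_mkcondr -(sum_nbr (fun C => G #|C|.-1) vA).
  apply: eq_bigr => K /andP[_ sub].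
  by rewrite (card_add vA sub).
rewrite exchange_big /=.
apply: eq_bigr => C /andP[_ sub].
rewrite -big_mkcondr /=.
rewrite (eq_bigl (fun v => v \in C)); first by rewrite sumr_const.
move=> v /=; apply/andP/idP => [[]//| vC]; split => //.
exact: (subsetP sub).
Qed.

Lemma sum_card0 (X : {set U}) :
  \sum_(K | clique K && (K \subset X)) ((#|K| == 0)%:R : int) = 1.
Proof.
rewrite (bigD1 set0) /=; last by rewrite sub0set andbT; apply/cliqueP => a b; rewrite inE.
rewrite cards0 /= big1 ?addr0 // => K /andP[_ nK].
by rewrite cards_eq0 (negbTE nK).
Qed.


Lemma inS_S d A : inS f d.+1 A <-> ~ contractible f A /\ inGstep f (inS f d) (inB f d) A /\
   (forall x, x \in A -> inB f d.+1 (A :\ x)).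
Proof. by []. Qed.

Lemma inB_S d A : inB f d.+1 A <-> contractible f A /\ inGstep f (inS f d) (inB f d) A /\
   exists D, is_bdry f (inB f d) A D /\ inS f d D.
Proof. by []. Qed.

Lemma inS_0 A : inS f 0 A <-> edgeless f A /\ #|A| = 2%N.
Proof. by []. Qed.
Lemma inB_0 A : inB f 0 A <-> edgeless f A /\ #|A| = 1%N.
Proof. by []. Qed.

Lemma nbr_del (A : {set U}) x y : nbr f (A :\ y) x = (nbr f A x) :\ y.
Proof. by apply/setP => z; rewrite !inE andbA. Qed.

Lemma nbr_nbr (A : {set U}) u w : nbr f (nbr f A u) w = nbr f (nbr f A w) u.
Proof. by apply/setP => z; rewrite !inE; case: (z \in A); case: (f u z); case: (f w z). Qed.

Lemma nbr1 a : nbr f [set a] a = set0.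
Proof. by apply/setP => z; rewrite !inE; case: eqP => // ->; rewrite firr. Qed.

Lemma rchi0 : rchi set0 = 1.
Proof.
rewrite /rchi -(sum_card0 set0); apply: eq_bigr => K /andP[_].
by rewrite subset0 => /eqP ->; rewrite cards0.
Qed.

Lemma rchi1 a : rchi [set a] = 0.
Proof. by rewrite (rchi_del (set11 a)) setDv nbr1 subrr. Qed.

Lemma contr_rchi A : contractible f A -> rchi A = 0.
Proof.
elim => [B /eqP/cards1P [a ->]| B x xB _ IH1 _ IH2]; first exact: rchi1.
by rewrite (rchi_del xB) IH1 IH2 subrr.
Qed.

Lemma inB_contr d A : inB f d A -> contractible f A.
Proof.
case: d => [/inB_0 [_ c]| d /inB_S []//]; exact: contr_K1.
Qed.

Lemma inS_rchi d A : inS f d A -> rchi A = - (-1) ^+ d.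
Proof.
elim: d A => [|d IH] A.
  case/inS_0 => ed /eqP/cards2P [a [b [nab eA]]]; subst A.
  have aA : a \in [set a; b] by rewrite !inE eqxx.
  rewrite (rchi_del aA).
  have -> : [set a; b] :\ a = [set b].
    by apply/setP => z; rewrite !inE; case: (z =P a) => [->|]; rewrite ?(negbTE nab) ?eqxx //; rewrite andbT.
  have -> : nbr f [set a; b] a = set0.
    apply/setP => z; rewrite !inE; apply/negP => /andP [zA faz].
    by move: (ed a z aA); rewrite !inE zA faz => /(_ isT).
  by rewrite rchi1 rchi0 sub0r expr0.
case/inS_S => _ [[Hl [x [xA nB]]] Hdel].
have Sx : inS f d (nbr f A x) by case: (Hl x xA).
rewrite (rchi_del xA) (IH _ Sx) (contr_rchi (inB_contr (Hdel x xA))).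
by rewrite sub0r opprK exprS mulN1r opprK.
Qed.

Lemma SB_disj d A : inS f d A -> inB f d A -> False.
Proof.
case: d => [/inS_0 [_ h2] /inB_0 [_ h1]| d /inS_S [nc _] /inB_S [c _]//]; by rewrite h2 in h1.
Qed.

Lemma inS1_link C y : inS f 1 C -> y \in C -> inS f 0 (nbr f C y).
Proof.
move=> SC yC; case/inS_S: (SC) => _ [[Hl _] Hdel].
case: (Hl y yC) => // /inB_0 [_ /eqP/cards1P [a Ha]].
have aN : a \in nbr f C y by rewrite Ha set11.
move: aN; rewrite in_nbr => /andP [aC fya].
case/inB_S: (Hdel a aC) => _ [[Hl2 _] _].
have yCa : y \in C :\ a by rewrite !inE yC andbT; apply/eqP => eya; rewrite eya firr in fya.
have e0 : nbr f (C :\ a) y = set0 by rewrite nbr_del Ha setDv.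
case: (Hl2 y yCa); rewrite e0.
  by case/inS_0 => _; rewrite cards0.
by case/inB_0 => _; rewrite cards0.
Qed.

Lemma inS2_link S x : inS f 2 S -> x \in S -> inS f 1 (nbr f S x).
Proof.
move=> SS xS; case/inS_S: (SS) => _ [[Hl _] Hdel].
case: (Hl x xS) => // BP.
set P := nbr f S x in BP *.
case/inB_S: (BP) => cP [[_ [y [yP nBy]]] _].
have yS0 : inS f 0 (nbr f P y).
  case/inB_S: (BP) => _ [[Hl1 _] _]; by case: (Hl1 y yP).
have r1 := inS_rchi yS0.
have r2 := rchi_del yP; rewrite (contr_rchi cP) r1 in r2.
have r3 : rchi (P :\ y) = -1.
  by move: r2; rewrite expr0 opprK => /eqP; rewrite eq_sym addr_eq0 => /eqP.
move: yP; rewrite in_nbr => /andP [yS fxy].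
have xSy : x \in S :\ y by rewrite !inE xS andbT; apply/eqP => exy; rewrite exy firr in fxy.
case/inB_S: (Hdel y yS) => _ [[Hl2 _] _].
case: (Hl2 x xSy); rewrite nbr_del -/P.
  by move/inS_rchi; rewrite r3 expr1 opprK.
by move/inB_contr/contr_rchi; rewrite r3.
Qed.



Lemma SB_inG d A : inS f d A \/ inB f d A -> inG f d A.
Proof.
case: d => [[/inS_0[]|/inB_0[]]//|d [/inS_S [_ []]|/inB_S [_ []]]//].
Qed.

Lemma clique_bound d (A K : {set U}) : inG f d A -> clique K -> K \subset A -> (#|K| <= d.+1)%N.
Proof.
elim: d A K => [|d IH] A K.
  move=> ed /cliqueP cl /subsetP sub; apply/card_le1_eqP => x y xK yK.
  apply/eqP; apply/negP => /negP nxy; rewrite eq_sym in nxy.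
  by move: (ed x y (sub x xK) (sub y yK)); rewrite (cl x y xK yK nxy).
move=> [Hl _] cK sub.
case: (set_0Vmem K) => [->|[x xK]]; first by rewrite cards0.
have xA : x \in A by exact: (subsetP sub).
have := clique_add (K :\ x) xA.
rewrite setD1K // eqxx andbT cK sub /= => /esym/andP [cK' sub'].
have := IH _ _ (SB_inG (Hl x xA)) cK' sub'.
by rewrite (cardsD1 x K) xK.
Qed.


Section Count.
Variable D : {set U}.
Hypothesis HG : inG f 3 [set: U].
Hypothesis HD : is_bdry f (inB f 2) [set: U] D.
Local Notation N u := (nbr f [set: U] u).
Hypothesis Hbd : forall u w, u \in D -> w \in D -> w \in N u -> inB f 1 (nbr f (N u) w).

Lemma link_in u : u \in D -> inB f 2 (N u).
Proof. by move/HD => []. Qed.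

Lemma link_out u : u \notin D -> inS f 2 (N u).
Proof.
move=> uD; case: HG => Hl _; case: (Hl u (in_setT u)) => // B.
by move: uD; have [_ /(_ (conj (in_setT u) B)) ->] := HD u.
Qed.

Lemma rchi_N u : rchi (N u) = if u \in D then 0 else -1.
Proof.
case: ifP => uD; first exact/contr_rchi/(inB_contr (link_in uD)).
by rewrite (inS_rchi (link_out (negbT uD))) expr2 mulN1r opprK.
Qed.

Lemma rchi_NN u w : w \in N u ->
  rchi (nbr f (N u) w) = if (u \in D) && (w \in D) then 0 else 1.
Proof.
move=> wN.
have rS : forall X, inS f 1 X -> rchi X = 1 by move=> X /inS_rchi; rewrite expr1 opprK.
case: ifP => [/andP[uD wD]|].
  exact/contr_rchi/(inB_contr (Hbd uD wD wN)).
case uD: (u \in D) => /=; last first.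
  by move=> _; exact/rS/inS2_link/wN/link_out/negbT.
move=> wD; rewrite nbr_nbr; apply/rS/inS2_link; first exact: link_out (negbT wD).
by move: wN; rewrite !in_nbr !in_setT /= fsym.
Qed.


Definition hq (k : nat) : int :=
  match k with 1 => 1 | 2 => -1 | 3 => 3 | 4 => -5 | _ => 0 end.

Lemma hq_spec k : (k <= 4)%N ->
  (((k.-1 == 0)%:R *+ k + (-1) ^+ k.-1 *+ k) *+ 2 +
   ((k.-1.-1 == 0)%:R *+ k.-1) *+ k - ((-1) ^+ k.-1.-1 *+ k.-1) *+ k : int) = 4 * hq k.
Proof. by case: k => [|[|[|[|[|]]]]]. Qed.

Lemma count_main : exists z : int,
  #|D|%:R *+ 2 + \sum_(u in D) (#|N u :&: D|)%:R = 4 * z.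
Proof.
pose P := fun C : {set U} => clique C && (C \subset [set: U]).
have E1 : \sum_(v in [set: U]) rchi (N v) = \sum_(C | P C) (-1) ^+ #|C|.-1 *+ #|C|.
  exact: (sumR [set: U] (fun k => (-1) ^+ k)).
have E3 : \sum_(v in [set: U]) (1 : int) = \sum_(C | P C) (#|C|.-1 == 0)%:R *+ #|C|.
  rewrite -(sumR [set: U] (fun k => (k == 0)%:R)).
  by apply: eq_bigr => v _; rewrite sum_card0.
have E2 : \sum_(u in [set: U]) \sum_(w in N u) rchi (nbr f (N u) w) =
   \sum_(C | P C) ((-1) ^+ #|C|.-1.-1 *+ #|C|.-1) *+ #|C|.
  rewrite -(sumR [set: U] (fun k => (-1) ^+ k.-1 *+ k)).
  apply: eq_bigr => u _.
  exact: (sumR (N u) (fun k => (-1) ^+ k)).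
have E4 : \sum_(u in [set: U]) \sum_(w in N u) (1 : int) =
   \sum_(C | P C) ((#|C|.-1.-1 == 0)%:R *+ #|C|.-1) *+ #|C|.
  rewrite -(sumR [set: U] (fun k => (k.-1 == 0)%:R *+ k)).
  apply: eq_bigr => u _.
  rewrite -(sumR (N u) (fun k => (k == 0)%:R)).
  by apply: eq_bigr => w _; rewrite sum_card0.
have L1 : \sum_(v in [set: U]) rchi (N v) = \sum_(v in [set: U]) (if v \in D then 0 else -1).
  by apply: eq_bigr => v _; rewrite rchi_N.
have L2 : \sum_(u in [set: U]) \sum_(w in N u) rchi (nbr f (N u) w) =
   \sum_(u in [set: U]) \sum_(w in N u) (if (u \in D) && (w \in D) then 0 else 1).
  by apply: eq_bigr => u _; apply: eq_bigr => w wN; rewrite rchi_NN.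
have C1 : #|D|%:R *+ 2 = (\sum_(v in [set: U]) (1 : int) + \sum_(v in [set: U]) (if v \in D then 0 else -1)) *+ 2.
  rewrite -big_split /=; congr (_ *+ 2).
  rewrite -sumr_const big_mkcond /= [RHS]big_mkcond /=.
  by apply: eq_bigr => v _; rewrite in_setT; case: (v \in D); rewrite ?addr0 ?subrr.
have C2 : \sum_(u in D) (#|N u :&: D|)%:R = \sum_(u in [set: U]) \sum_(w in N u) (1 : int)
   - \sum_(u in [set: U]) \sum_(w in N u) (if (u \in D) && (w \in D) then 0 else 1).
  rewrite -sumrB big_mkcond /= [RHS]big_mkcond /=.
  apply: eq_bigr => u _; rewrite in_setT -sumrB.
  case: (u \in D) => /=.
    rewrite -sumr_const [LHS]big_mkcond [RHS]big_mkcond /=.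
    by apply: eq_bigr => w _; rewrite in_setI; case: (w \in N u); case: (w \in D); rewrite ?subr0 ?subrr.
  by rewrite big1 // => w _; rewrite subrr.
exists (\sum_(C | P C) hq #|C|).
rewrite C1 C2 -L2 -L1 E1 E2 E3 E4 mulr_sumr -big_split /= -sumrMnl -sumrB -big_split /=.
apply: eq_bigr => C PC.
rewrite -hq_spec; last exact: (clique_bound HG (proj1 (andP PC)) (proj2 (andP PC))).
by rewrite addrA.
Qed.

End Count.

Close Scope ring_scope.
Section Phi.
Variable D : {set U}.
Hypothesis HG : inG f 3 [set: U].
Hypothesis HD : is_bdry f (inB f 2) [set: U] D.
Local Notation N u := (nbr f [set: U] u).
Variables (T : finType) (e : rel T) (phi : T -> U).
Hypothesis phi_inj : injective phi.
Hypothesis phiD : forall u, u \in D <-> exists x, phi x = u.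
Hypothesis phie : forall x y, f (phi x) (phi y) = e x y.
Hypothesis Hcyc : forall x : T, is_cycle_ge4 e (nbr e [set: T] x).

Lemma pred_mod n i j : 0 < n -> j < n -> i = j.+1 %% n -> j = (i + n.-1) %% n.
Proof.
move=> n0 jn ->; rewrite modnDml.
have -> : (j.+1 + n.-1 = j + n)%N by rewrite addSn -addnS prednK.
by rewrite modnDr modn_small.
Qed.

Lemma Hbd_proof u w : u \in D -> w \in D -> w \in N u -> inB f 1 (nbr f (N u) w).
Proof.
move=> uD wD wN.
have [_ [_ [D' [bD' SD']]]] := proj1 (inB_S _ _) (link_in HD uD).
suff wD' : w \in D' by case: (bD' w) => /(_ wD') [].
have D'D : forall y, y \in D' -> y \in D.
  move=> y yD'; case: (bD' y) => /(_ yD') [yN By] _.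
  case yD: (y \in D) => //.
  have Sy := link_out HG HD (negbT yD).
  have uNy : u \in N y by move: yN; rewrite !in_nbr !in_setT /= fsym.
  have := inS2_link Sy uNy; rewrite nbr_nbr => S1.
  by case: (SB_disj S1 By).
have D'M : forall y, y \in D' -> y \in N u.
  by move=> y yD'; case: (bD' y) => /(_ yD') [].
have [x0 ex0] : exists x, phi x = u by apply/phiD.
have [t0 et0] : exists x, phi x = w by apply/phiD.
have [s [s4 us Zs Hs]] := Hcyc x0.
set n := size s in s4 Hs.
set Y := [set t | phi t \in D'].
have YZ : forall t, t \in Y -> t \in s.
  move=> t; rewrite inE => /D'M; rewrite -ex0 in_nbr phie -Zs !inE.
  by [].
have Ydeg : forall t, t \in Y -> #|nbr e Y t| = 2.
  move=> t tY.
  have tD' : phi t \in D' by rewrite inE in tY.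
  have := inS1_link SD' tD'; case/inS_0 => _ c2; rewrite -c2.
  have -> : nbr f D' (phi t) = phi @: (nbr e Y t).
    apply/setP => y; apply/idP/imsetP.
      rewrite in_nbr => /andP [yD' fy].
      have [t' et'] : exists x, phi x = y by apply/phiD/D'D.
      exists t'; last by rewrite et'.
      by rewrite !inE et' yD' /= -phie et' fy.
    by move=> [t' + ->]; rewrite !inE phie.
  by rewrite card_imset.
have n0 : 0 < n by apply: leq_trans s4.
have step : forall i, i < n -> nth x0 s i \in Y -> nth x0 s (i.+1 %% n) \in Y.
  move=> i ni sY.
  pose B := [set t | (t \in s) && e (nth x0 s i) t].
  have BB : B \subset [set nth x0 s (i.+1 %% n); nth x0 s ((i + n.-1) %% n)].
    apply/subsetP => t; rewrite !inE => /andP [ts et].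
    have ej := nth_index x0 ts.
    have jn : index t s < n by rewrite index_mem.
    rewrite -ej (Hs x0 i _ ni jn) in et.
    case/orP: et => /eqP eq; rewrite -ej.
      by rewrite eq eqxx.
    by rewrite -(pred_mod n0 jn eq) eqxx orbT.
  have sub : nbr e Y (nth x0 s i) \subset B.
    apply/subsetP => t; rewrite in_nbrG => /andP [tY et].
    by rewrite inE et (YZ _ tY).
  have eqYB : nbr e Y (nth x0 s i) = B.
    apply/eqP; rewrite eqEcard sub Ydeg //=.
    apply: leq_trans (subset_leq_card BB) _.
    by rewrite cards2; case: (_ != _).
  have : nth x0 s (i.+1 %% n) \in B.
    rewrite !inE mem_nth ?ltn_pmod //= (Hs x0 _ _ ni) ?ltn_pmod //.
    by rewrite eqxx.
  by rewrite -eqYB !inE => /andP [].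
have allY : forall i0, i0 < n -> nth x0 s i0 \in Y -> forall j, j < n -> nth x0 s j \in Y.
  move=> i0 i0n Y0 j jn.
  have H : forall k, nth x0 s ((i0 + k) %% n) \in Y.
    elim => [|k IH]; first by rewrite addn0 modn_small.
    have := step _ (ltn_pmod _ n0) IH.
    by rewrite -addn1 modnDml -addnA addn1.
  move: (H (j + n - i0)).
  have -> : i0 + (j + n - i0) = j + n.
    by rewrite addnBA ?addKn // ; apply: leq_trans (ltnW i0n) (leq_addl _ _).
  by rewrite modnDr modn_small.
have [y [yD' _]] : exists y, y \in D' /\ ~ inB f 0 (nbr f D' y).
  by case/inS_S: SD' => _ [[_ H] _].
have [t1 et1] : exists x, phi x = y by apply/phiD/D'D.
have t1Y : t1 \in Y by rewrite inE et1.
have t1s := YZ _ t1Y.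
have Y1 : nth x0 s (index t1 s) \in Y by rewrite nth_index.
have t0s : t0 \in s.
  by rewrite -Zs in_nbrG in_setT /=; move: wN; rewrite -ex0 -et0 in_nbr in_setT phie.
have i1 : index t1 s < n by rewrite index_mem.
have i0 : index t0 s < n by rewrite index_mem.
have := allY _ i1 Y1 _ i0.
by rewrite nth_index // inE et0.
Qed.

End Phi.

End Gen.
Definition adjL : seq (seq nat) :=
 [:: [:: 4; 5; 6; 7; 8]; [:: 3; 5; 6; 9; 10]; [:: 4; 9; 6; 7; 11; 12];
     [:: 1; 5; 11; 7; 8; 13; 10]; [:: 0; 5; 12; 2; 9; 10; 13; 8];
     [:: 0; 4; 12; 11; 3; 1; 6]; [:: 0; 5; 1; 9; 2; 7]; [:: 0; 6; 2; 11; 3; 8];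
     [:: 0; 4; 13; 3; 7]; [:: 1; 6; 2; 4; 10]; [:: 1; 3; 13; 4; 9];
     [:: 2; 7; 3; 5; 12]; [:: 2; 4; 5; 11]; [:: 3; 8; 4; 10]].

Definition TT := 'I_14.
Definition mk (k : nat) : TT := Ordinal (ltn_pmod k (erefl true : 0 < 14)).
Definition ee : rel TT := fun i j => (val j) \in nth [::] adjL (val i).
Definition sx (x : TT) : seq TT := [seq mk k | k <- nth [::] adjL (val x)].
Definition enumT : seq TT := [seq mk k | k <- iota 0 14].

Definition chk_sym := all (fun i => all (fun j => ee i j == ee j i) enumT) enumT.
Definition chk_irr := all (fun i => ~~ ee i i) enumT.
Definition chk_cyc (x : TT) := let s := sx x in
  [&& 3 < size s, uniq s, all (fun y => ee x y == (y \in s)) enumT &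
    all (fun i => all (fun j => ee (nth x s i) (nth x s j) ==
       ((j == i.+1 %% size s) || (i == j.+1 %% size s))) (iota 0 (size s))) (iota 0 (size s))].

Lemma chk_all : [&& chk_sym, chk_irr & all chk_cyc enumT].
Proof. vm_compute. reflexivity. Qed.

Lemma deg_sum : \sum_(x <- enumT) size (sx x) = 78.
Proof. rewrite unlock. vm_compute. reflexivity. Qed.

Lemma mem_enumT (i : TT) : i \in enumT.
Proof.
apply/mapP; exists (val i); first by rewrite mem_iota /= add0n ltn_ord.
by apply: val_inj; rewrite /= modn_small.
Qed.

Lemma allT (P : pred TT) : all P enumT -> forall i, P i.
Proof. by move/allP => H i; apply: H; apply: mem_enumT. Qed.

Lemma ee_sym : symmetric ee.
Proof.
case/and3P: chk_all => /allT H _ _ i j.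
by move: (H i) => /allT /(_ j) /eqP.
Qed.

Lemma ee_irr : irreflexive ee.
Proof. case/and3P: chk_all => _ /allT H _ i; exact: negbTE (H i). Qed.

Lemma cycT x : chk_cyc x.
Proof. case/and3P: chk_all => _ _ /allT H; exact: H. Qed.

Lemma nbr_sx x : nbr ee [set: TT] x =i sx x.
Proof.
case/and4P: (cycT x) => _ _ /allT H _ y.
by rewrite in_nbrG in_setT /=; apply/eqP; apply: H.
Qed.

Lemma cycle_T x : is_cycle_ge4 ee (nbr ee [set: TT] x).
Proof.
case/and4P: (cycT x) => s4 us _ /allP H.
exists (sx x); split => // [|x0 i j ilt jlt]; first exact: nbr_sx.
have := H i; rewrite mem_iota add0n ilt /= => /(_ isT) /allP /(_ j).
rewrite mem_iota add0n jlt /= => /(_ isT) /eqP <-.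
by rewrite !(set_nth_default x x0).
Qed.

Lemma card_nbrT x : #|nbr ee [set: TT] x| = size (sx x).
Proof.
case/and4P: (cycT x) => _ us _ _.
by rewrite (eq_card (nbr_sx x)); apply/card_uniqP.
Qed.

Lemma uniq_enumT : uniq enumT.
Proof. by vm_compute. Qed.

Lemma deg_sumT : \sum_(x : TT) #|nbr ee [set: TT] x| = 78.
Proof.
rewrite -deg_sum.
have pe : perm_eq (index_enum TT) enumT.
  apply: uniq_perm; first exact: index_enum_uniq.
    exact: uniq_enumT.
  by move=> i; rewrite mem_index_enum mem_enumT.
rewrite (perm_big _ pe) /=.
by apply: eq_bigr => x _; rewrite card_nbrT.
Qed.

Open Scope ring_scope.

Theorem mainTheorem7 :
  exists (T : finType) (e : rel T),
    simple_graph e /\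
    (forall x : T, is_cycle_ge4 e (nbr e [set: T] x)) /\
    ~ (exists (U : finType) (f : rel U) (D : {set U}) (phi : T -> U),
         simple_graph f /\ inG f 3 [set: U] /\ boundary f 3 [set: U] D /\
         injective phi /\ (forall u, u \in D <-> exists x, phi x = u) /\
         (forall x y, f (phi x) (phi y) = e x y)).
Proof.
exists TT, ee; split; first by split; [exact: ee_sym | exact: ee_irr].
split; first exact: cycle_T.
move=> [U [f [D [phi [[fsym firr] [HG [HD [pinj [pD pe]]]]]]]]].
have [z Hz] := count_main fsym firr HG HD
  (fun u w => Hbd_proof fsym firr HG HD pinj pD pe cycle_T (u := u) (w := w)).
have DE : D = phi @: [set: TT].
  apply/setP => u; apply/idP/imsetP.
    by move/pD => [x <-]; exists x.
  by move=> [x _ ->]; apply/pD; exists x.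
have cD : #|D| = 14%N by rewrite DE card_imset // cardsT card_ord.
have NE : forall x, nbr f [set: U] (phi x) :&: D = phi @: nbr ee [set: TT] x.
  move=> x; apply/setP => u; apply/idP/imsetP.
    rewrite in_setI => /andP [uN]; move/pD => [t et]; exists t => //.
    by move: uN; rewrite -et !in_nbrG !in_setT pe.
  by move=> [t tN ->]; rewrite in_setI in_nbrG in_setT pe; rewrite in_nbrG in_setT in tN; rewrite tN /=; apply/pD; exists t.
have SE : \sum_(u in D) (#|nbr f [set: U] u :&: D|%:R : int) = 78.
  rewrite {1}DE big_imset /=; last by move=> x y _ _; apply: pinj.
  rewrite (eq_bigr (fun x => (#|nbr ee [set: TT] x|%:R : int))); last first.
    by move=> x _; rewrite NE card_imset.
  rewrite -natr_sum (eq_bigl (fun _ => true)) ?deg_sumT // => x; exact: in_setT.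
rewrite SE cD in Hz.
rewrite mulr2n in Hz.
lia.
Qed.
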